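(* Let $(M,\mathrm{d})$ be a metric space, $\mathcal X$ a set, $\tau>0$, $\mathcal S\subseteq M^{\mathcal X}$ and $f\in M^{\mathcal X}\setminus\mathcal S$. Let $\mathcal A$ be a deterministic algorithm that solves $\mathtt{Dec}(\mathcal S,f)$ from $q$ many $\tau$-accurate evaluation queries. Then for any probability measure $\mu$ over $\mathcal S$, $$q\ge\left(\max_{x\in\mathcal X}\Pr_{s\sim\mu}[\mathrm{d}(s(x),f(x))>\tau]\right)^{-1}.$$
   Context: For $s\in M^{\mathcal X}$, the evaluation oracle $\mathrm{Eval}_\tau(s)$, queried with $x\in\mathcal X$, returns some $v\in M$ with $\mathrm{d}(v,s(x))\le\tau$ (any such value may be returned); this is a $\tau$-accurate evaluation query. The decision problem $\mathtt{Dec}(\mathcal S,f)$: given evaluation-oracle access to an unknown $s\in\mathcal S\cup\{f\}$, decide whether $s\in\mathcal S$ or $s=f$. Solving it means being correct for every such $s$ and every valid oracle behaviour. *)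

(* Defs.v *)
From HB Require Import structures.
From mathcomp Require Import all_boot all_order all_algebra.
From mathcomp Require Import all_classical all_reals all_analysis.
Set Implicit Arguments. Unset Strict Implicit. Unset Printing Implicit Defensive.
Import Order.TTheory GRing.Theory Num.Theory.
Local Open Scope ring_scope.
Local Open Scope classical_set_scope.

Definition is_metric (R : realType) (M : Type) (dist : M -> M -> R) : Prop :=
  [/\ forall x y, 0 <= dist x y,
      forall x y, dist x y = 0 <-> x = y,
      forall x y, dist x y = dist y x &
      forall x y z, dist x z <= dist x y + dist y z].

(* A deterministic (adaptive) algorithm making evaluation queries:
   given the list of answers received so far, it chooses the next query
   point; after its queries it outputs a boolean from the full answer list
   (true = "s is in S", false = "s = f"). *)
Record det_alg (X M : Type) := DetAlg {
  next_query : seq M -> X ;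
  output : seq M -> bool }.

(* The answer list [a] (of length q) is a valid transcript of tau-accurate
   evaluation oracle answers for the function s when the algorithm A runs:
   the i-th answer is within tau of s evaluated at the i-th query, where the
   i-th query is determined by the first i answers. *)
Definition valid_transcript (R : realType) (X M : Type) (dist : M -> M -> R)
    (tau : R) (A : det_alg X M) (s : X -> M) (q : nat) (a : seq M) : Prop :=
  size a = q /\
  forall i, (i < q)%N ->
    forall v0 : M, dist (nth v0 a i) (s (next_query A (take i a))) <= tau.

Definition solves_Dec (R : realType) (X M : Type) (dist : M -> M -> R)
    (tau : R) (S : set (X -> M)) (f : X -> M) (A : det_alg X M) (q : nat) : Prop :=
  forall s : X -> M, (S s \/ s = f) ->
    forall a : seq M, valid_transcript dist tau A s q a ->
      (S s -> output A a = true) /\ (s = f -> output A a = false).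

(* Main.v *)
Require Import Defs.
From HB Require Import structures.
From mathcomp Require Import all_boot all_order all_algebra.
From mathcomp Require Import all_classical all_reals all_analysis.
Import Order.TTheory GRing.Theory Num.Theory.
Local Open Scope ring_scope.
Local Open Scope classical_set_scope.

Fixpoint build {X M : Type} (A : det_alg X M) (f : X -> M) (n : nat) : seq M :=
  match n with
  | 0 => [::]
  | n.+1 => rcons (build A f n) (f (next_query A (build A f n)))
  end.

Lemma size_build {X M : Type} (A : det_alg X M) f n : size (build A f n) = n.
Proof. by elim: n => //= n IH; rewrite size_rcons IH. Qed.

Lemma take_build {X M : Type} (A : det_alg X M) f n i : (i <= n)%N ->
  take i (build A f n) = build A f i.
Proof.
elim: n => [|n IH]; first by rewrite leqn0 => /eqP ->.
rewrite leq_eqVlt => /orP [/eqP ->|]; first by rewrite take_oversize // size_build.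
rewrite ltnS => hi /=; rewrite -cats1 takel_cat ?size_build // IH //.
Qed.

Lemma nth_build {X M : Type} (A : det_alg X M) f n i v0 : (i < n)%N ->
  nth v0 (build A f n) i = f (next_query A (build A f i)).
Proof.
elim: n => // n IH hi /=.
rewrite nth_rcons size_build.
case: ltngtP => [h|h|->] //; first exact: IH.
by move: hi; rewrite ltnS leqNgt h.
Qed.

Theorem mainTheorem3 (R : realType) (M X : Type) (dist : M -> M -> R)
  (hdist : is_metric dist) (tau : R) (htau : 0 < tau)
  (S : set (X -> M)) (f : X -> M) (hf : ~ S f)
  (A : det_alg X M) (q : nat) (hA : solves_Dec dist tau S f A q)
  (d : measure_display) (Omega : measurableType d) (mu : probability Omega R)
  (smp : Omega -> (X -> M)) (hsmp : forall w, S (smp w))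
  (hmeas : forall x : X, measurable [set w | tau < dist (smp w x) (f x)]) :
  (1 <= (q%:R)%:E *
        ereal_sup (range (fun x : X => mu [set w | (tau < dist (smp w x) (f x))%R])))%E.
Proof.
case: hdist => _ hd0 hsym _.
pose xs i := next_query A (build A f i).
pose E i := [set w | tau < dist (smp w (xs i)) (f (xs i))].
have cover : [set: Omega] `<=` \big[setU/set0]_(i < q) E i.
  move=> w _; rewrite -bigcup_mkord.
  apply: contrapT => hn.
  have hv : forall s, (forall i, (i < q)%N -> dist (s (xs i)) (f (xs i)) <= tau) ->
      valid_transcript dist tau A s q (build A f q).
    move=> s hs; split; first exact: size_build.
    move=> i hi v0; rewrite nth_build // take_build ?(ltnW hi) //.
    by rewrite hsym; apply: hs.
  have hle : forall i, (i < q)%N -> dist (smp w (xs i)) (f (xs i)) <= tau.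
    move=> i hi; rewrite leNgt; apply/negP => hlt; apply: hn; exists i => //.
  have h1 := (hA (smp w) (or_introl (hsmp w)) (build A f q) (hv _ hle)).1 (hsmp w).
  have hff : forall i, (i < q)%N -> dist (f (xs i)) (f (xs i)) <= tau.
    by move=> i _; rewrite (proj2 (hd0 _ _) erefl); exact: ltW.
  have h2 := (hA f (or_intror erefl) (build A f q) (hv _ hff)).2 erefl.
  by rewrite h1 in h2.
rewrite -(probability_setT mu).
have -> : [set: Omega] = \big[setU/set0]_(i < q) E i.
  by apply/seteqP; split => // w.
apply: le_trans (Boole_inequality mu (A := E) _) _.
  by move=> i _; exact: hmeas.
set sup := ereal_sup _.
apply: (@le_trans _ _ (\sum_(i < q) sup)%E).
  apply: lee_sum => i _.
  by apply: ereal_sup_ubound; exists (xs i).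
by rewrite sumr_const card_ord mule_natl.
Qed.
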